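(* For any two different words $x,y$ over a finite alphabet $\Sigma$, there is a 2-state MCQFA (with complex amplitudes) that separates $x$ and $y$ in nondeterministic mode.
   Context: A 2-state Moore–Crutchfield quantum finite automaton (MCQFA) over $\Sigma$ consists of a unitary $U_\sigma\in\mathbb{C}^{2\times 2}$ for each $\sigma\in\Sigma$, an initial unit vector $|u_0\rangle\in\mathbb{C}^2$ and a set of accepting basis states; on input $w=w_1\cdots w_k$ the final state is $U_{w_k}\cdots U_{w_1}|u_0\rangle$ and the acceptance probability is the sum of the squared moduli of its accepting coordinates. The automaton separates $x$ and $y$ in nondeterministic mode if one of them is accepted with nonzero probability and the other with probability $0$. *)

(* Defs.v *)
(* Complex amplitudes are modelled by an arbitrary
   numClosedFieldType C (algebraically closed field with conjugation and
   norm, e.g. algC). *)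
From HB Require Import structures.
From mathcomp Require Import all_boot all_order all_algebra.
Set Implicit Arguments. Unset Strict Implicit. Unset Printing Implicit Defensive.
Import Order.TTheory GRing.Theory Num.Theory.
Local Open Scope ring_scope.

Definition adjmx (C : numClosedFieldType) (m n : nat) (A : 'M[C]_(m, n)) : 'M[C]_(n, m) :=
  \matrix_(i < n, j < m) (A j i)^*.

Definition unitary2 (C : numClosedFieldType) (U : 'M[C]_2) : Prop :=
  U *m adjmx U = 1%:M /\ adjmx U *m U = 1%:M.

Definition unit_vec2 (C : numClosedFieldType) (u : 'cV[C]_2) : Prop :=
  \sum_(i < 2) `|u i 0| ^+ 2 = 1.

Record MCQFA2 (C : numClosedFieldType) (Sigma : finType) := {
  trans : Sigma -> 'M[C]_2;
  init : 'cV[C]_2;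
  acc : {set 'I_2} }.

Definition wf_MCQFA2 (C : numClosedFieldType) (Sigma : finType) (M : MCQFA2 C Sigma) : Prop :=
  (forall s, unitary2 (trans M s)) /\ unit_vec2 (init M).

Definition final_state (C : numClosedFieldType) (Sigma : finType) (M : MCQFA2 C Sigma)
  (w : seq Sigma) : 'cV[C]_2 :=
  foldl (fun v s => trans M s *m v) (init M) w.

Definition acc_prob (C : numClosedFieldType) (Sigma : finType) (M : MCQFA2 C Sigma)
  (w : seq Sigma) : C :=
  \sum_(i in acc M) `|final_state M w i 0| ^+ 2.

Definition separates_nd (C : numClosedFieldType) (Sigma : finType) (M : MCQFA2 C Sigma)
  (x y : seq Sigma) : Prop :=
  (acc_prob M x != 0 /\ acc_prob M y = 0) \/ (acc_prob M x = 0 /\ acc_prob M y != 0).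

(* Main.v *)
Require Import Defs.
From HB Require Import structures.
From mathcomp Require Import all_boot all_order all_algebra all_field.
From mathcomp Require Import zify ring lra.
Set Implicit Arguments. Unset Strict Implicit. Unset Printing Implicit Defensive.
Import Order.TTheory GRing.Theory Num.Theory.
Local Open Scope ring_scope.

Definition PA : 'M[{poly int}]_2 :=
  \matrix_(i, j) if i == j then 3%:R else 4%:R * 'X.
Definition PB : 'M[{poly int}]_2 :=
  \matrix_(i, j) if i == j then 3%:R else if i == 0 then - 4%:R else 4%:R.

Section Word.
Variables (Sigma : finType) (a b : Sigma).
Definition Pl (s : Sigma) : 'M[{poly int}]_2 :=
  if s == a then PA else if s == b then PB else 1.
Definition Pw (w : seq Sigma) : 'M[{poly int}]_2 :=
  foldr (fun s m => m *m Pl s) 1 w.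

Definition phiF : {rmorphism {poly int} -> 'F_5} := horner_eval 3%:R \o map_poly intr.

Definition e1F : 'F_5 * 'F_5 := (0, 1).
Definition rA : 'F_5 * 'F_5 := (3%:R, 2%:R).
Definition rB : 'F_5 * 'F_5 := (3%:R, 1).
Fixpoint vfirst (w : seq Sigma) : 'F_5 * 'F_5 :=
  if w is s :: w' then (if s == a then rA else if s == b then rB else vfirst w')
  else e1F.

Lemma vfirst3 w : vfirst w = e1F \/ vfirst w = rA \/ vfirst w = rB.
Proof.
elim: w => [|s w IH] /=; first by left.
by case: (s == a); [right; left | case: (s == b); [right; right|]].
Qed.

Lemma phiF_PA i j : phiF (PA i j) = if i == j then 3%:R else 2%:R.
Proof.
rewrite mxE; case: (i == j); rewrite /phiF /= ?rmorph_nat //.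
rewrite rmorphM rmorph_nat /= map_polyX /horner_eval !hornerE.
by apply/eqP; vm_compute.
Qed.

Lemma phiF_PB (i j : 'I_2) : phiF (PB i j) =
  if i == j then 3%:R else if i == 0 then 1 else 4%:R.
Proof.
rewrite mxE; case: (i == j); rewrite /phiF /= ?rmorph_nat //.
case: (i == 0); rewrite ?rmorphN ?rmorph_nat //=.
by apply/eqP; vm_compute.
Qed.

Lemma invF5 w : exists2 l : 'F_5, l != 0 &
  phiF (Pw w 1 0) = l * (vfirst w).1 /\ phiF (Pw w 1 1) = l * (vfirst w).2.
Proof.
elim: w => [|s w [l l0 [E0 E1]]].
  exists 1; first by apply/eqP; vm_compute.
  by rewrite /= !mxE /= !mul1r rmorph0 rmorph1 /horner_eval !hornerE.
change (Pw (s :: w)) with (Pw w *m Pl s).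
rewrite [vfirst _]/= /Pl.
have mE : forall (M : 'M[{poly int}]_2) j, (Pw w *m M) 1 j =
   Pw w 1 0 * M 0 j + Pw w 1 1 * M 1 j.
  move=> M j; rewrite mxE !big_ord_recr big_ord0 /= add0r.
  have -> : widen_ord (leqnSn 1) ord_max = 0 :> 'I_2 by apply/val_inj.
  by have -> : ord_max = 1 :> 'I_2 by apply/val_inj.
case: (s == a).
  exists (l * ((vfirst w).1 + 4%:R * (vfirst w).2)).
    rewrite mulf_neq0 //.
    by case: (vfirst3 w) => [->|[->|->]]; vm_compute.
  rewrite !mE !rmorphD !rmorphM E0 E1 !phiF_PA /=.
  by case: (vfirst3 w) => [->|[->|->]] /=; split; rewrite -!mulrA -mulrDr; congr (_ * _); apply/eqP; vm_compute.
case: (s == b).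
  exists (l * ((vfirst w).1 + 3%:R * (vfirst w).2)).
    rewrite mulf_neq0 //.
    by case: (vfirst3 w) => [->|[->|->]]; vm_compute.
  rewrite !mE !rmorphD !rmorphM E0 E1 !phiF_PB /=.
  by case: (vfirst3 w) => [->|[->|->]] /=; split; rewrite -!mulrA -mulrDr; congr (_ * _); apply/eqP; vm_compute.
by exists l => //; rewrite mulmx1.
Qed.
End Word.

Section CSide.
Variable C : numClosedFieldType.
Definition phiC : {rmorphism {poly int} -> C} := horner_eval 'i \o map_poly intr.

Lemma transfer (q : {poly int}) : phiF q != 0 -> phiC q != 0.
Proof.
apply: contraNneq => Hq.
set d := ('X^2 + 1%:P : {poly int}).
have md : d \is monic by rewrite monicXnaddC.
have sd : size d = 3%N by rewrite size_XnaddC.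
have qE := Pdiv.RingMonic.rdivp_eq md q.
set h := Pdiv.CommonRing.rdivp q d in qE.
set r := Pdiv.CommonRing.rmodp q d in qE.
have sr : (size r <= 2)%N.
  by rewrite -ltnS -sd Pdiv.CommonRing.ltn_rmodpN0 // monic_neq0.
have hs : forall (R : nzRingType) (f : int -> R), (size (map_poly f r) <= 2)%N.
  by move=> R f; apply: leq_trans (size_poly _ _) sr.
have dC : phiC d = 0.
  rewrite /phiC /= /horner_eval rmorphD /= map_polyXn map_polyC /= !hornerE sqrCi.
  by rewrite rmorph1 addNr.
have dF : phiF d = 0.
  rewrite /phiF /= /horner_eval rmorphD /= map_polyXn map_polyC /= !hornerE.
  by rewrite rmorph1; apply/eqP; vm_compute.
have rC : phiC r = (r`_0)%:~R + (r`_1)%:~R * 'i.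
  rewrite /phiC /= /horner_eval (horner_coef_wide _ (n := 2)) ?hs //.
  by rewrite !big_ord_recr big_ord0 /= !coef_map /= add0r expr0 mulr1 expr1.
have rF : phiF r = (r`_0)%:~R + (r`_1)%:~R * 3%:R.
  rewrite /phiF /= /horner_eval (horner_coef_wide _ (n := 2)) ?hs //.
  by rewrite !big_ord_recr big_ord0 /= !coef_map /= add0r expr0 mulr1 expr1.
have r0 : phiC r = 0 by move: Hq; rewrite qE rmorphD rmorphM dC mulr0 add0r.
have sq : ((r`_0 ^+ 2 + r`_1 ^+ 2)%:~R : C) = 0.
  have e : ((r`_0)%:~R : C) = - ((r`_1)%:~R * 'i) by apply/eqP; rewrite -addr_eq0 -rC r0.
  by rewrite rmorphD !rmorphXn /= e sqrrN exprMn sqrCi mulrN1 addNr.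
move/eqP: sq; rewrite intr_eq0 paddr_eq0 ?sqr_ge0 // !sqrf_eq0 => /andP[/eqP z0 /eqP z1].
by rewrite qE rmorphD rmorphM dF mulr0 add0r rF z0 z1 mul0r addr0.
Qed.
End CSide.

Section U.
Variable C : numClosedFieldType.
Definition UA : 'M[C]_2 :=
  \matrix_(i, j) if i == j then 3%:R / 5%:R else 4%:R / 5%:R * 'i.
Definition UB : 'M[C]_2 :=
  \matrix_(i, j) if i == j then 3%:R / 5%:R else
     if i == 0 then - (4%:R / 5%:R) else 4%:R / 5%:R.

Lemma ifix (L R k : C) : L - R = k * ('i ^+ 2 + 1) -> L = R.
Proof. by rewrite sqrCi addNr mulr0 => /eqP; rewrite subr_eq0 => /eqP. Qed.

Lemma conj35 (n : nat) : (n%:R / 5%:R : C)^* = n%:R / 5%:R.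
Proof. by rewrite rmorphM fmorphV /= !conjC_nat. Qed.

Lemma conjM35 (n : nat) (z : C) : (n%:R / 5%:R * z)^* = n%:R / 5%:R * z^*.
Proof. by rewrite (rmorphM _ (n%:R / 5%:R : C) z); congr (_ * _); apply: conj35. Qed.

Lemma n5 : (5%:R : C) != 0. Proof. by rewrite pnatr_eq0. Qed.

Ltac ent := apply/matrixP; case=> [[|[|//]] ?]; case=> [[|[|//]] ?];
  rewrite !mxE !big_ord_recr big_ord0 /= add0r !mxE /= ?rmorphN ?conjM35 ?conj35 ?conjCi.

Lemma unitaryA : unitary2 UA.
Proof.
split; ent.
all: first [by apply: (ifix (k := - (16%:R / 25%:R))); field; rewrite ?n5
           | by field; rewrite ?n5].
Qed.

Lemma unitaryB : unitary2 UB.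
Proof.
split; ent.
all: first [by apply: (ifix (k := 0)); field; rewrite ?n5
           | by field; rewrite ?n5].
Qed.

Lemma unitary1 : unitary2 (1 : 'M[C]_2).
Proof.
split; ent.
all: by rewrite ?rmorph1 ?rmorph0 ?mulr0 ?mul0r ?mulr1 ?addr0 ?add0r.
Qed.
End U.

Section Adj.
Variable C : numClosedFieldType.
Lemma adjmxM m n p (A : 'M[C]_(m, n)) (B : 'M[C]_(n, p)) :
  adjmx (A *m B) = adjmx B *m adjmx A.
Proof.
apply/matrixP => i j; rewrite !mxE rmorph_sum; apply: eq_bigr => k _.
by rewrite !mxE rmorphM mulrC.
Qed.
Lemma adjmx1 n : adjmx (1%:M : 'M[C]_n) = 1%:M.
Proof. by apply/matrixP => i j; rewrite !mxE eq_sym conjC_nat. Qed.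
End Adj.

Section Aut.
Variables (C : numClosedFieldType) (Sigma : finType) (a b : Sigma).
Definition trans0 (s : Sigma) : 'M[C]_2 := if s == a then UA C else if s == b then UB C else 1.
Definition dsc (s : Sigma) : C := if s == a then 5%:R^-1 else if s == b then 5%:R^-1 else 1.

Lemma UA_map : UA C = 5%:R^-1 *: map_mx (phiC C) PA.
Proof.
apply/matrixP => i j; rewrite !mxE; case: (i == j).
  by rewrite rmorph_nat; ring.
rewrite rmorphM rmorph_nat /phiC /= /horner_eval map_polyX hornerX.
by ring.
Qed.

Lemma UB_map : UB C = 5%:R^-1 *: map_mx (phiC C) PB.
Proof.
apply/matrixP => i j; rewrite !mxE; case: (i == j).
  by rewrite rmorph_nat; ring.
by case: (i == 0); rewrite ?rmorphN rmorph_nat; ring.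
Qed.

Lemma trans_map s : trans0 s = dsc s *: map_mx (phiC C) (Pl a b s).
Proof.
rewrite /trans0 /dsc /Pl; case: (s == a); first exact: UA_map.
case: (s == b); first exact: UB_map.
by rewrite scale1r map_mx1.
Qed.

Definition Mw (w : seq Sigma) : 'M[C]_2 := foldr (fun s m => m *m trans0 s) 1 w.

Lemma Mw_map w : exists2 c : C, c != 0 & Mw w = c *: map_mx (phiC C) (Pw a b w).
Proof.
elim: w => [|s w [c c0 E]].
  by exists 1; rewrite ?oner_neq0 // scale1r map_mx1.
exists (c * dsc s).
  { rewrite mulf_neq0 // /dsc; case: (s == a); last case: (s == b).
    all: by rewrite ?invr_eq0 ?pnatr_eq0 ?oner_neq0. }
change (Mw (s :: w)) with (Mw w *m trans0 s).
rewrite E trans_map -scalemxAl -scalemxAr scalerA.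
change (Pw a b (s :: w)) with (Pw a b w *m Pl a b s).
by rewrite map_mxM.
Qed.

Lemma foldr_Mw (X : 'M[C]_2) p : foldr (fun s m => m *m trans0 s) X p = X *m Mw p.
Proof. elim: p => [|s p IH] /=; first by rewrite mulmx1. by rewrite IH mulmxA. Qed.

Lemma Mw_cat p q : Mw (p ++ q) = Mw q *m Mw p.
Proof. by rewrite /Mw foldr_cat foldr_Mw. Qed.

Lemma trans_unit s : trans0 s *m adjmx (trans0 s) = 1%:M.
Proof.
rewrite /trans0; case: (s == a); first by case: (unitaryA C).
case: (s == b); first by case: (unitaryB C).
by case: (unitary1 C).
Qed.

Lemma Mw_unit w : Mw w *m adjmx (Mw w) = 1%:M.
Proof.
elim: w => [|s w IH] /=; first by rewrite adjmx1 mulmx1.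
by rewrite adjmxM mulmxA -(mulmxA (Mw w)) trans_unit mulmx1 IH.
Qed.
End Aut.

Definition Dv (u v : 'F_5 * 'F_5) := u.1 * v.2 - u.2 * v.1.

Section Core.
Variables (C : numClosedFieldType) (Sigma : finType) (a b : Sigma).

Lemma adjmxK m n (A : 'M[C]_(m, n)) : adjmx (adjmx A) = A.
Proof. by apply/matrixP => i j; rewrite !mxE conjCK. Qed.

Lemma conjN' (z : C) : (- z)^* = - z^*.
Proof. exact: rmorphN. Qed.

Lemma sum2 (f : 'I_2 -> C) : \sum_i f i = f 0 + f 1.
Proof.
rewrite !big_ord_recr big_ord0 /= add0r.
have -> : widen_ord (leqnSn 1) ord_max = 0 :> 'I_2 by apply/val_inj.
by have -> : ord_max = 1 :> 'I_2 by apply/val_inj.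
Qed.

Lemma foldl_Mw (v : 'cV[C]_2) w :
  foldl (fun v s => trans0 C a b s *m v) v w = Mw C a b w *m v.
Proof.
elim: w v => [|s w IH] v /=; first by rewrite mul1mx.
by rewrite IH mulmxA.
Qed.

Lemma trans_unitary s : unitary2 (trans0 C a b s).
Proof.
rewrite /trans0; case: (s == a); first exact: unitaryA.
case: (s == b); first exact: unitaryB.
exact: unitary1.
Qed.

Lemma core p x' y' : Dv (vfirst a b x') (vfirst a b y') != 0 ->
  exists M : MCQFA2 C Sigma, wf_MCQFA2 M /\
    acc_prob M (p ++ x') = 0 /\ acc_prob M (p ++ y') != 0.
Proof.
move=> HD.
have [cx cx0 Ex] := Mw_map C a b x'.
have [cy cy0 Ey] := Mw_map C a b y'.
have [lx lx0 [Fx0 Fx1]] := invF5 a b x'.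
have [ly ly0 [Fy0 Fy1]] := invF5 a b y'.
set q := Pw a b x' 1 0 * Pw a b y' 1 1 - Pw a b x' 1 1 * Pw a b y' 1 0.
have hq : phiF q != 0.
  rewrite rmorphB !rmorphM Fx0 Fx1 Fy0 Fy1.
  have -> : lx * (vfirst a b x').1 * (ly * (vfirst a b y').2) -
     lx * (vfirst a b x').2 * (ly * (vfirst a b y').1) =
     lx * ly * Dv (vfirst a b x') (vfirst a b y') by rewrite /Dv; ring.
  by rewrite !mulf_neq0.
have hqC := transfer C hq.
set Mx := Mw C a b x'.
set My := Mw C a b y'.
set Mp := Mw C a b p.
have hD : Mx 1 0 * My 1 1 - Mx 1 1 * My 1 0 != 0.
  have -> : Mx 1 0 * My 1 1 - Mx 1 1 * My 1 0 = cx * cy * phiC C q.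
    by rewrite /Mx /My Ex Ey !mxE /q rmorphB !rmorphM; ring.
  by rewrite !mulf_neq0.
set w0 : 'cV[C]_2 := \col_i (if i == 0 then - Mx 1 1 else Mx 1 0).
set u := adjmx Mp *m w0.
exists {| trans := trans0 C a b; init := u; acc := [set 1] |}.
have fin : forall w, final_state {| trans := trans0 C a b; init := u; acc := [set 1] |} (p ++ w)
   = Mw C a b w *m w0.
  move=> w; rewrite /final_state /= foldl_Mw Mw_cat /u -/Mp.
  by rewrite -mulmxA (mulmxA Mp) Mw_unit mul1mx.
split; [split; [exact: trans_unitary|] | split].
- have key : forall v : 'cV[C]_2, \sum_i `|v i 0| ^+ 2 = (adjmx v *m v) 0 0.
    by move=> v; rewrite mxE; apply: eq_bigr => i _; rewrite !mxE normCK mulrC.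
  rewrite /unit_vec2 /= key /u adjmxM adjmxK.
  rewrite -mulmxA (mulmxA Mp) Mw_unit mul1mx.
  have U1 := Mw_unit C a b x'.
  have : (Mx *m adjmx Mx) 1 1 = (1%:M : 'M[C]_2) 1 1 by rewrite U1.
  rewrite !mxE !sum2 !mxE /= => H; apply: etrans (etrans _ H) _ => //.
  rewrite conjN'; ring.
- rewrite /acc_prob big_set1 fin !mxE sum2 !mxE /=.
  have -> : Mx 1 0 * - Mx 1 1 + Mx 1 1 * Mx 1 0 = 0 by ring.
  by rewrite normr0 expr0n.
- rewrite /acc_prob big_set1 fin !mxE sum2 !mxE /=.
  have -> : My 1 0 * - Mx 1 1 + My 1 1 * Mx 1 0 = Mx 1 0 * My 1 1 - Mx 1 1 * My 1 0 by ring.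
  by rewrite sqrf_eq0 normr_eq0.
Qed.
End Core.

Lemma split_diff (T : eqType) (x y : seq T) : x <> y ->
  exists p x' y', x = p ++ x' /\ y = p ++ y' /\
   ((exists a b s t, x' = a :: s /\ y' = b :: t /\ a != b) \/
    (exists c t, x' = [::] /\ y' = c :: t) \/ (exists c s, x' = c :: s /\ y' = [::])).
Proof.
elim: x y => [|a s IH] [|b t] H; first by case: H.
- by exists [::], [::], (b::t); do 2 split => //; right; left; exists b, t.
- by exists [::], (a::s), [::]; do 2 split => //; right; right; exists a, s.
- case: (eqVneq a b) => [eab|nab].
  + subst b. have Hst : s <> t by move=> E; apply: H; rewrite E.
    have [p [x' [y' [-> [-> R]]]]] := IH t Hst.
    by exists (a :: p), x', y'.
  + by exists [::], (a::s), (b::t); do 2 split => //; left; exists a, b, s, t.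
Qed.

Theorem mainTheorem5 (C : numClosedFieldType) (Sigma : finType) (x y : seq Sigma) :
  x <> y -> exists M : MCQFA2 C Sigma, wf_MCQFA2 M /\ separates_nd M x y.
Proof.
move=> /split_diff [p [x' [y' [-> [-> [[a [b [s [t [-> [-> nab]]]]]] | [[c [t [-> ->]]] | [c [s [-> ->]]]]]]]]]].
- have [|M [wf [h0 h1]]] := @core C _ a b p (a :: s) (b :: t).
    have nba : (b == a) = false by rewrite eq_sym (negbTE nab).
    by rewrite /= eqxx nba eqxx; vm_compute.
  by exists M; split => //; right.
- have [|M [wf [h0 h1]]] := @core C _ c c p [::] (c :: t).
    by rewrite /= eqxx; vm_compute.
  by exists M; split => //; right.
- have [|M [wf [h0 h1]]] := @core C _ c c p [::] (c :: s).
    by rewrite /= eqxx; vm_compute.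
  by exists M; split => //; left.
Qed.
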